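(* Let $0<s_1<s_2$, $m\ge1$, and set $\alpha=\frac1{s_1}+\frac1{s_2}$, $\beta_1=-\frac1{s_1}$, $\beta_2=-\frac1{s_2}$. Then the matrix $A_{2m}^{(\beta_2,0)}(\alpha,\beta_1,\beta_2)$ has no eigenvalue in the interval $\Gamma=\big(\frac2{s_2},\frac2{s_1}\big)$; equivalently, no eigenvalue $\lambda$ with $\lambda-\alpha\in(\beta_1-\beta_2,\beta_2-\beta_1)$.
   Context: $A_{2m}^{(a,b)}(\alpha,\beta_1,\beta_2)\in\mathbb R^{2m\times 2m}$ denotes the symmetric tridiagonal matrix with diagonal entries $(\alpha+a,\alpha,\dots,\alpha,\alpha+b)$ and $(i,i+1)$ off-diagonal entries equal to $\beta_1$ for $i$ odd and $\beta_2$ for $i$ even, $1\le i\le 2m-1$. (Removing the central row and column of the defect capacitance matrix yields a block-diagonal matrix whose blocks are this matrix and its conjugate by the reversal permutation.) *)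

(* Defs.v *)
From HB Require Import structures.
From mathcomp Require Import all_boot all_order all_algebra.
Set Implicit Arguments. Unset Strict Implicit. Unset Printing Implicit Defensive.
Import Order.TTheory GRing.Theory Num.Theory.
Local Open Scope ring_scope.

(* A_n^{(a,b)}(alpha, beta1, beta2): symmetric tridiagonal n x n matrix with
   diagonal (alpha + a, alpha, ..., alpha, alpha + b) and (i,i+1) entry
   beta1 for i odd, beta2 for i even (1-based i).  With 0-based indices
   (ordinals), the (k,k+1) entry is beta1 when k is even, beta2 when k odd. *)
Definition Atri (R : nzRingType) (n : nat) (a b alpha beta1 beta2 : R) : 'M[R]_n :=
  \matrix_(i < n, j < n)
    if i == j then
      alpha + (if (i : nat) == 0%N then a else 0)
            + (if (i : nat) == n.-1 then b else 0)
    else if ((j : nat) == i.+1) || ((i : nat) == j.+1) then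
      (if odd (minn i j) then beta2 else beta1)
    else 0.

(* Main.v *)
From HB Require Import structures.
From mathcomp Require Import all_boot all_order all_algebra.
From mathcomp Require Import ring lra zify.
Import Order.TTheory GRing.Theory Num.Theory.
Local Open Scope ring_scope.
Require Import Defs.

Lemma sum3 (R : nzRingType) (F : nat -> R) k :
  (forall j, j != k -> j.+1 != k -> j != k.+1 -> F j = 0) ->
  forall N, \sum_(j < N) F j =
    (if (0 < k)%N && (k.-1 < N)%N then F k.-1 else 0)
    + (if (k < N)%N then F k else 0) + (if (k.+1 < N)%N then F k.+1 else 0).
Proof.
move=> HF; elim=> [|N IH]; first by rewrite big_ord0 !andbF !addr0.
rewrite big_ord_recr /= IH.
have [h1|h1] := eqVneq N k.-1.
  case: k HF IH h1 => [|k] HF IH h1 /=; subst N.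
    have -> : (0 < 0)%N = false by []. 
    by rewrite /= !addr0 !add0r.
  rewrite /=.
  have -> : (k < k)%N = false by apply/negbTE; lia.
  have -> : (k < k.+1)%N = true by lia.
  have -> : (k.+1 < k)%N = false by apply/negbTE; lia.
  have -> : (k.+1 < k.+1)%N = false by apply/negbTE; lia.
  have -> : (k.+2 < k)%N = false by apply/negbTE; lia.
  have -> : (k.+2 < k.+1)%N = false by apply/negbTE; lia.
  by rewrite !addr0 !add0r.
have [h2|h2] := eqVneq N k.
  subst N.
  have -> : (k < k)%N = false by apply/negbTE; lia.
  have -> : (k < k.+1)%N = true by lia.
  have -> : (k.+1 < k)%N = false by apply/negbTE; lia.
  have -> : (k.+1 < k.+1)%N = false by apply/negbTE; lia.
  have -> : (k.-1 < k.+1)%N = true by lia.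
  have -> : ((0 < k)%N && (k.-1 < k)%N) = (0 < k)%N by case: k {HF IH h1} => // k; rewrite /= ltnSn.
  by rewrite !addr0 ?add0r andbT.
have [h3|h3] := eqVneq N k.+1.
  subst N.
  have -> : (k < k.+1)%N = true by lia.
  have -> : (k < k.+2)%N = true by lia.
  have -> : (k.+1 < k.+1)%N = false by apply/negbTE; lia.
  have -> : (k.+1 < k.+2)%N = true by lia.
  have -> : (k.-1 < k.+1)%N = true by lia.
  have -> : (k.-1 < k.+2)%N = true by lia.
  by rewrite !addr0.
rewrite (HF N) ?addr0; last 3 first.
- by [].
- by apply/eqP => E; move/eqP: h1; apply; rewrite -E.
- by [].
have -> : (k < N.+1)%N = (k < N)%N by move/eqP: h2 => h2; lia.
have -> : (k.+1 < N.+1)%N = (k.+1 < N)%N by move/eqP: h3 => h3; lia.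
have -> : ((0 < k)%N && (k.-1 < N.+1)%N) = ((0 < k)%N && (k.-1 < N)%N) by move/eqP: h1 => h1; lia.
by [].
Qed.

Lemma core (R : realFieldType) (a b x : R) (u w : nat -> R) m :
 0 < b -> b < a -> b - a < x -> x < a - b ->
 x*u 0%N + b*u 0%N + a*w 0%N = 0 ->
 (forall i, (i.+1 < m)%N -> x*u i.+1 + b*w i + a*w i.+1 = 0) ->
 (forall i, (i < m)%N -> x*w i + a*u i + b*u i.+1 = 0) ->
 u m = 0 -> (0 < m)%N ->
 forall i, (i < m)%N -> u i = 0 /\ w i = 0.
Proof.
move=> hb hab hx1 hx2 E0 EO EE um hm.
pose t i := (a*u i + b*u i.+1)^+2 - x^+2 * u i ^+2.
have ident : forall j, (j.+1 <= m)%N ->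
    \sum_(i < j.+1) t i + b*x*u j.+1 * w j = b*x*u 0%N ^+2.
  elim=> [|j IH] hj.
    rewrite big_ord1; apply/eqP; rewrite -subr_eq0; apply/eqP.
    transitivity ((x*w 0%N + a*u 0%N + b*u 1%N) * ((x*w 0%N + a*u 0%N + b*u 1%N) - x * w 0%N)
       - x * u 0%N * (x*u 0%N + b*u 0%N + a*w 0%N)); first by rewrite /t; ring.
    by rewrite EE // E0; ring.
  rewrite big_ord_recr /= -(IH (ltnW hj)) -!addrA; congr (_ + _).
  apply/eqP; rewrite -subr_eq0; apply/eqP.
  transitivity ((x*w j.+1 + a*u j.+1 + b*u j.+2) * ((x*w j.+1 + a*u j.+1 + b*u j.+2) - x * w j.+1)
       - x * u j.+1 * (x*u j.+1 + b*w j + a*w j.+1)); first by rewrite /t; ring.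
  by rewrite EE // EO //; ring.
have ineq : forall i, (a-b)*b*(u i ^+2 - u i.+1 ^+2) + ((a-b)^+2 - x^+2) * u i ^+2 <= t i.
  move=> i; have h : 0 <= a*b*(u i + u i.+1)^+2.
    by rewrite mulr_ge0 ?sqr_ge0 // mulr_ge0 //; lra.
  rewrite /t; nra.
have tel : forall j, (a-b)*b*(u 0%N ^+2 - u j ^+2) + \sum_(i < j) ((a-b)^+2 - x^+2) * u i ^+2
     <= \sum_(i < j) t i.
  elim=> [|j IH]; first by rewrite !big_ord0 subrr mulr0 addr0.
  rewrite !big_ord_recr /=; have := ineq j; lra.
case: m hm EO EE um ident tel => // m' _ EO EE um ident tel.
have T := tel m'.+1; have I := ident m' (leqnn _); rewrite um in T I.
have cx : 0 < (a-b)^+2 - x^+2 by nra.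
have Sge : 0 <= \sum_(i < m'.+1) ((a-b)^+2 - x^+2) * u i ^+2.
  by apply: sumr_ge0 => i _; apply: mulr_ge0; [lra | exact: sqr_ge0].
have h0 : 0 <= b * u 0%N ^+2 * ((a-b) - x).
  by apply: mulr_ge0; [apply: mulr_ge0; [lra | exact: sqr_ge0] | lra].
have S0 : \sum_(i < m'.+1) ((a-b)^+2 - x^+2) * u i ^+2 = 0.
  apply/eqP; rewrite eq_le Sge andbT; move: T I; rewrite expr0n /= subr0 mulr0 mul0r addr0.
  move=> T I; nra.
have U0 : forall i, (i < m'.+1)%N -> u i = 0.
  move=> i hi.
  have Hge : forall j : 'I_m'.+1, predT j -> 0 <= ((a-b)^+2 - x^+2) * u j ^+2.
    by move=> j _; apply: mulr_ge0; [lra | exact: sqr_ge0].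
  have := @psumr_eq0P _ _ predT (fun j : 'I_m'.+1 => ((a-b)^+2 - x^+2) * u j ^+2) Hge S0 (Ordinal hi) isT.
  move=> /= /eqP; rewrite mulf_eq0 sqrf_eq0 => /orP [/eqP|/eqP //]; lra.
have W0 : forall i, (i < m'.+1)%N -> w i = 0.
  elim=> [|i IH] hi.
    move: E0; rewrite U0 // !mulr0 !add0r => /eqP; rewrite mulf_eq0 => /orP [/eqP|/eqP //]; lra.
  move: (EO i hi); rewrite U0 // IH ?(ltnW hi) // !mulr0 !add0r => /eqP; rewrite mulf_eq0 => /orP [/eqP|/eqP //]; lra.
by move=> i hi; rewrite U0 ?W0.
Qed.

Theorem mainTheorem6 (R : realFieldType) (s1 s2 : R) (m : nat)
  (hs1 : 0 < s1) (hs12 : s1 < s2) (hm : (1 <= m)%N) :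
  let alpha := s1^-1 + s2^-1 in
  let beta1 := - s1^-1 in
  let beta2 := - s2^-1 in
  forall lambda : R, 2 / s2 < lambda -> lambda < 2 / s1 ->
    ~~ eigenvalue (Atri (2 * m)%N beta2 0 alpha beta1 beta2) lambda.
Proof.
move=> alpha beta1 beta2 lambda hl1 hl2.
apply/negP => /eigenvalueP [v Hv vnz].
have hs2 : 0 < s2 by apply: lt_trans hs12.
have hb : 0 < s2^-1 by rewrite invr_gt0.
have hab : s2^-1 < s1^-1 by rewrite ltf_pV2.
pose f (k : nat) : R := if (insub k : option 'I_(2 * m)) is Some j then v 0 j else 0.
have fv : forall j : 'I_(2 * m), f j = v 0 j by move=> j; rewrite /f valK.
have fout : forall k, (2 * m <= k)%N -> f k = 0.
  by move=> k hk; rewrite /f insubF // ltnNge hk.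
pose E (j k : nat) : R := if j == k then alpha + (if j == 0%N then beta2 else 0)
   + (if j == (2 * m).-1 then 0 else 0)
   else if (k == j.+1) || (j == k.+1) then (if odd (minn j k) then beta2 else beta1) else 0.
have row : forall k, (k < 2 * m)%N -> \sum_(j < 2 * m) f j * E j k = lambda * f k.
  move=> k hk; have := congr1 (fun M : 'rV_(2 * m) => M 0 (Ordinal hk)) Hv.
  rewrite !mxE -(fv (Ordinal hk)) => <-.
  by apply eq_bigr => j _; rewrite mxE fv.
have rowE : forall k, (k < 2 * m)%N ->
   (if (0 < k)%N && (k.-1 < 2 * m)%N then f k.-1 * E k.-1 k else 0)
   + f k * E k k + (if (k.+1 < 2 * m)%N then f k.+1 * E k.+1 k else 0) = lambda * f k.
  move=> k hk; rewrite -row // (@sum3 _ (fun j => f j * E j k) k) ?hk // => j h1 h2 h3.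
  by rewrite /E (negPf h1) eq_sym (negPf h2) (negPf h3) mulr0.
have Ed : forall k, E k k = alpha + (if k == 0%N then beta2 else 0).
  by move=> k; rewrite /E eqxx if_same addr0.
have Er : forall k, E k.+1 k = if odd k then beta2 else beta1.
  move=> k; rewrite /E.
  have -> : (k.+1 == k) = false by apply/negbTE; lia.
  have -> : minn k.+1 k = k by lia.
  by rewrite eqxx orbT.
have El : forall k, E k k.+1 = if odd k then beta2 else beta1.
  move=> k; rewrite /E.
  have -> : (k == k.+1) = false by apply/negbTE; lia.
  have -> : minn k k.+1 = k by lia.
  by rewrite eqxx.
have m2 : (1 < 2 * m)%N by lia.
have E0 : (lambda - alpha) * f 0%N + s2^-1 * f 0%N + s1^-1 * f 1%N = 0.
  have := rowE 0%N (ltnW m2); rewrite /= m2 Ed Er /= add0r /alpha /beta1 /beta2.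
  move=> H; lra.
have EO : forall i, (i.+1 < m)%N ->
   (lambda - alpha) * f (i.+1).*2 + s2^-1 * f (i.*2).+1 + s1^-1 * f ((i.+1).*2).+1 = 0.
  move=> i hi; have hk : (i.*2.+2 < 2 * m)%N by lia.
  have := rowE _ hk; rewrite /=.
  have -> : (i.*2.+1 < 2 * m)%N = true by lia.
  have -> : (i.*2.+3 < 2 * m)%N = true by lia.
  rewrite El Ed Er /= odd_double /= doubleS /alpha /beta1 /beta2 => H; lra.
have EE : forall i, (i < m)%N ->
   (lambda - alpha) * f (i.*2).+1 + s1^-1 * f i.*2 + s2^-1 * f (i.+1).*2 = 0.
  move=> i hi; have hk : (i.*2.+1 < 2 * m)%N by lia.
  have := rowE _ hk; rewrite /=.
  have -> : (i.*2 < 2 * m)%N = true by lia.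
  rewrite El Ed Er /= odd_double /= doubleS /alpha /beta1 /beta2.
  case: ifP => h2 H; first lra.
  rewrite (fout i.*2.+2) in H *; last by lia.
  lra.
have um : f m.*2 = 0 by rewrite fout //; lia.
have hx1 : s2^-1 - s1^-1 < lambda - alpha by move: hl1; rewrite /alpha; lra.
have hx2 : lambda - alpha < s1^-1 - s2^-1 by move: hl2; rewrite /alpha; lra.
have C := @core R (s1^-1) (s2^-1) (lambda - alpha) (fun j => f j.*2) (fun j => f j.*2.+1) m
  hb hab hx1 hx2 E0 EO EE um hm.
move/negP: vnz; apply; apply/eqP/rowP => k; rewrite mxE -fv.
have hk2 : (k./2 < m)%N by have := ltn_ord k; lia.
rewrite -(odd_double_half k); case: (odd k) => /=.
- by by case: (C _ hk2) => _ ->.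
- by by case: (C _ hk2) => ->.
Qed.
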